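(* Let $m\in\mathbb Z\setminus\{0\}$ and $\xi\in\mathbb Z_m$. The assignment $a\mapsto a$, $b\mapsto e_0$ extends to a group isomorphism $f:\overline{BS}(m,\xi)\to\widetilde{BS}(m,\xi)$. Its inverse is determined by $f^{-1}(a)=a$ and $f^{-1}(e_i)=b_i$ for every $i\ge 0$, where $b_0=b$, $b_1=ab^ma^{-1}$ and $b_i=ab_{i-1}b^{-r_{i-1}(\xi)}a^{-1}$ for $i\ge 2$.
   Context: For $p,q\in\mathbb Z\setminus\{0\}$, $BS(p,q)=\langle a,b\mid ab^pa^{-1}=b^q\rangle$, marked by $(a,b)$. The space of marked groups on two generators $\mathcal G_2$ is the set of normal subgroups $N$ of the free group $\mathbb F(a,b)$ (a marked group $(G,(s_1,s_2))$ corresponds to the kernel of $\mathbb F(a,b)\to G$, $a\mapsto s_1,b\mapsto s_2$), with the ultrametric $d(N_1,N_2)=e^{-\lambda}$ for $N_1\neq N_2$, where $\lambda$ is the minimal word length of an element of $N_1\triangle N_2$. For $m\in\mathbb Z\setminus\{0\}$, $\mathbb Z_m=\varprojlim \mathbb Z/m^h\mathbb Z$ is the ring of $m$-adic integers, with the $m$-adic topology. For $\xi\in\mathbb Z_m$, $\overline{BS}(m,\xi)$ denotes the limit in $\mathcal G_2$ of $BS(m,\xi_n)$ for any sequence of integers $(\xi_n)$ with $|\xi_n|\to\infty$ and $\xi_n\to\xi$ in $\mathbb Z_m$ (this limit exists and is independent of the chosen sequence); it is marked by the images of $a,b$. The functions $r_i$: for $\xi\in\mathbb Z_m$ put $r_0(\xi)=0$,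 $s_0(\xi)=1$ and, for $i\ge1$, let $r_i(\xi)\in\{0,\dots,|m|-1\}$ and $s_i(\xi)\in\mathbb Z_m$ be the unique elements with $\xi\, s_{i-1}(\xi)=m\,s_i(\xi)+r_i(\xi)$. The group $\widetilde{BS}(m,\xi)$: let $E$ be the free abelian group with basis $e_0,e_1,e_2,\dots$ (written additively), $E_{m,\xi}\le E$ the subgroup with basis $me_0,\ e_1-r_1(\xi)e_0,\ e_2-r_2(\xi)e_0,\dots$, and $E_1\le E$ the subgroup with basis $e_1,e_2,\dots$. Let $\phi:E_{m,\xi}\to E_1$ be the isomorphism with $\phi(me_0)=e_1$ and $\phi(e_i-r_i(\xi)e_0)=e_{i+1}$ for $i\ge1$. Then $\widetilde{BS}(m,\xi)$ is the HNN extension $\langle E,a\mid a x a^{-1}=\phi(x)\ \forall x\in E_{m,\xi}\rangle$. *)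

(* Defs.v *)
(* Groups are handled via words in the free group and
   normal subgroups (kernels) as predicates on words. *)
From Stdlib Require Import ZArith List Arith.
Import ListNotations.
Open Scope Z_scope.

(* a letter is a generator together with an "inverse" flag (true = inverse) *)
Definition letter (X : Type) := (X * bool)%type.
Definition word (X : Type) := list (letter X).

Definition inv_letter {X} (l : letter X) : letter X := (fst l, negb (snd l)).
Definition inv_word {X} (w : word X) : word X := rev (map inv_letter w).

Definition gen {X} (x : X) : word X := [(x, false)].

Definition wrep {X} (w : word X) (n : nat) : word X := concat (repeat w n).
Definition wpow {X} (w : word X) (k : Z) : word X :=
  if (0 <=? k) then wrep w (Z.to_nat k) else wrep (inv_word w) (Z.to_nat (- k)).

Definition subst {X Y} (f : X -> word Y) (w : word X) : word Y :=
  flat_map (fun l : letter X => if snd l then inv_word (f (fst l)) else f (fst l)) w.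

(** * Presented groups: <X | R>; weq R is the congruence on words whose
    quotient is the group, and pres_ker R its kernel (normal closure of R). *)
Inductive weq {X} (R : word X -> Prop) : word X -> word X -> Prop :=
| weq_refl u : weq R u u
| weq_sym u v : weq R u v -> weq R v u
| weq_trans u v w : weq R u v -> weq R v w -> weq R u w
| weq_app u u' v v' : weq R u u' -> weq R v v' -> weq R (u ++ v) (u' ++ v')
| weq_cancel x : weq R [x; inv_letter x] []
| weq_rel r : R r -> weq R r [].

Definition pres_ker {X} (R : word X -> Prop) (w : word X) : Prop := weq R w [].

Inductive gen2 := ga | gb.
Inductive genT := tA | tE (i : nat).

(** * Baumslag-Solitar groups BS(p,q) = <a,b | a b^p a^-1 = b^q>, as the
    normal subgroup N of F(a,b) (kernel of the marking). *)
Definition BS_rel (p q : Z) (w : word gen2) : Prop :=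
  w = gen ga ++ wpow (gen gb) p ++ inv_word (gen ga) ++ inv_word (wpow (gen gb) q).
Definition BS_ker (p q : Z) : word gen2 -> Prop := pres_ker (BS_rel p q).

(** * Convergence in the space of marked groups G_2:
    d(N_n, N) -> 0 iff for every L, eventually N_n and N agree on all
    elements of word length <= L. *)
Definition marked_conv (Ns : nat -> word gen2 -> Prop) (N : word gen2 -> Prop) : Prop :=
  forall L : nat, exists n0 : nat, forall n : nat, (n0 <= n)%nat ->
    forall w : word gen2, (length w <= L)%nat -> (Ns n w <-> N w).

(** * m-adic integers Z_m = lim Z/m^h Z: an element is represented by a
    compatible sequence of integers x h (representing a class mod m^h). *)
Definition zm_elem (m : Z) (x : nat -> Z) : Prop :=
  forall h : nat, (m ^ Z.of_nat h | x (S h) - x h).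
Definition zm_eq (m : Z) (x y : nat -> Z) : Prop :=
  forall h : nat, (m ^ Z.of_nat h | x h - y h).
Definition zm_conv (m : Z) (xs : nat -> Z) (x : nat -> Z) : Prop :=
  forall h : nat, exists n0 : nat, forall n : nat, (n0 <= n)%nat ->
    (m ^ Z.of_nat h | xs n - x h).
Definition tends_to_infty (xs : nat -> Z) : Prop :=
  forall B : Z, exists n0 : nat, forall n : nat, (n0 <= n)%nat -> B <= Z.abs (xs n).

Definition rs_spec (m : Z) (xi : nat -> Z) (r : nat -> Z) (s : nat -> nat -> Z) : Prop :=
  r O = 0 /\ zm_eq m (s O) (fun _ => 1) /\
  forall i : nat, 0 <= r (S i) < Z.abs m /\ zm_elem m (s (S i)) /\
    zm_eq m (fun h => xi h * s i h) (fun h => m * s (S i) h + r (S i)).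

(** * The HNN extension BS~(m,xi) = < E, a | a x a^-1 = phi(x), x in E_{m,xi} >,
    presented with generators a, e_0, e_1, ...: relators making E free abelian
    on the e_i, and a y a^-1 = phi(y) for y ranging over the basis of E_{m,xi}
    (me_0 |-> e_1, e_i - r_i e_0 |-> e_(i+1) for i >= 1). *)
Definition tBS_rel (m : Z) (r : nat -> Z) (w : word genT) : Prop :=
  (exists i j : nat, w = gen (tE i) ++ gen (tE j) ++ inv_word (gen (tE i)) ++ inv_word (gen (tE j)))
  \/ w = gen tA ++ wpow (gen (tE O)) m ++ inv_word (gen tA) ++ inv_word (gen (tE 1%nat))
  \/ (exists i : nat, (1 <= i)%nat /\
        w = gen tA ++ gen (tE i) ++ wpow (gen (tE O)) (- r i) ++ inv_word (gen tA)
            ++ inv_word (gen (tE (S i)))).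
Definition tBS_ker (m : Z) (r : nat -> Z) : word genT -> Prop := pres_ker (tBS_rel m r).

Definition f_gen (g : gen2) : word genT :=
  match g with ga => gen tA | gb => gen (tE O) end.

Fixpoint bword (m : Z) (r : nat -> Z) (i : nat) : word gen2 :=
  match i with
  | O => gen gb
  | S O => gen ga ++ wpow (gen gb) m ++ inv_word (gen ga)
  | S j => gen ga ++ bword m r j ++ wpow (gen gb) (- r j) ++ inv_word (gen ga)
  end.

Definition g_gen (m : Z) (r : nat -> Z) (t : genT) : word gen2 :=
  match t with tA => gen ga | tE i => bword m r i end.

(** Marked-group quotients F(X)/K1 and F(Y)/K2 (K1, K2 kernels given as
    predicates on words); the assignments fg, gg on generators extend to
    homomorphisms which are mutually inverse isomorphisms. *)
Definition inverse_isos {X Y} (K1 : word X -> Prop) (K2 : word Y -> Prop)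
    (fg : X -> word Y) (gg : Y -> word X) : Prop :=
  (forall w, K1 w -> K2 (subst fg w)) /\
  (forall w, K2 w -> K1 (subst gg w)) /\
  (forall w, K1 (subst gg (subst fg w) ++ inv_word w)) /\
  (forall w, K2 (subst fg (subst gg w) ++ inv_word w)).

(* Main.v *)
Require Import Defs.
From Stdlib Require Import ZArith List Arith Lia Setoid Morphisms.
Import ListNotations.
Open Scope Z_scope.

Lemma inv_letter_inv {X} (l : letter X) : inv_letter (inv_letter l) = l.
Proof. destruct l; unfold inv_letter; simpl; rewrite Bool.negb_involutive; reflexivity. Qed.

Lemma inv_word_app {X} (u v : word X) : inv_word (u ++ v) = inv_word v ++ inv_word u.
Proof. unfold inv_word; rewrite map_app, rev_app_distr; reflexivity. Qed.

Lemma inv_word_inv {X} (u : word X) : inv_word (inv_word u) = u.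
Proof. unfold inv_word. rewrite map_rev, rev_involutive, map_map.
  induction u; simpl; auto. rewrite inv_letter_inv, IHu. reflexivity. Qed.

Lemma inv_word_nil {X} : inv_word (@nil (letter X)) = [].
Proof. reflexivity. Qed.

Lemma inv_word_cons {X} (x : letter X) u : inv_word (x :: u) = inv_word u ++ [inv_letter x].
Proof. reflexivity. Qed.

#[global] Instance weq_equiv {X} (R : word X -> Prop) : Equivalence (weq R).
Proof. split; [intro; apply weq_refl | intros ??; apply weq_sym | intros ???; apply weq_trans]. Qed.

#[global] Instance weq_app_proper {X} (R : word X -> Prop) :
  Proper (weq R ==> weq R ==> weq R) (@app (letter X)).
Proof. intros u u' H v v' H'. apply weq_app; auto. Qed.

#[global] Instance weq_cons_proper {X} (R : word X -> Prop) (x : letter X) :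
  Proper (weq R ==> weq R) (cons x).
Proof. intros u u' H. change (x :: u) with ([x] ++ u). change (x :: u') with ([x] ++ u'). rewrite H. reflexivity. Qed.

Lemma weq_inv_r {X} (R : word X -> Prop) u : weq R (u ++ inv_word u) [].
Proof.
  induction u as [|x u IH]; simpl. reflexivity.
  rewrite inv_word_cons. rewrite app_assoc. 
  change (x :: (u ++ inv_word u) ++ [inv_letter x]) with ([x] ++ (u ++ inv_word u) ++ [inv_letter x]).
  rewrite IH. simpl. apply weq_cancel.
Qed.

Lemma weq_inv_l {X} (R : word X -> Prop) u : weq R (inv_word u ++ u) [].
Proof. rewrite <- (inv_word_inv u) at 2. apply weq_inv_r. Qed.

Lemma weq_inv_proper' {X} (R : word X -> Prop) u v : weq R u v -> weq R (inv_word u) (inv_word v).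
Proof.
  intro H. transitivity (inv_word u ++ (v ++ inv_word v)).
  - rewrite weq_inv_r, app_nil_r. reflexivity.
  - transitivity (inv_word u ++ (u ++ inv_word v)).
    + apply weq_app; [reflexivity|]. apply weq_app; [symmetry; exact H|reflexivity].
    + rewrite app_assoc, weq_inv_l. reflexivity.
Qed.

#[global] Instance weq_inv_proper {X} (R : word X -> Prop) :
  Proper (weq R ==> weq R) (@inv_word X).
Proof. intros u v H; apply weq_inv_proper'; auto. Qed.

Lemma weq_cancel_r {X} (R : word X -> Prop) u w : weq R (u ++ inv_word u ++ w) w.
Proof. rewrite app_assoc, weq_inv_r. reflexivity. Qed.
Lemma weq_cancel_l {X} (R : word X -> Prop) u w : weq R (inv_word u ++ u ++ w) w.
Proof. rewrite app_assoc, weq_inv_l. reflexivity. Qed.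

Lemma wrep_S_r {X} (u : word X) n : wrep u (S n) = wrep u n ++ u.
Proof. unfold wrep. induction n. simpl. rewrite app_nil_r; reflexivity.
  simpl in *. rewrite <- app_assoc. f_equal. exact IHn. Qed.

Lemma wrep_S {X} (u : word X) n : wrep u (S n) = u ++ wrep u n.
Proof. reflexivity. Qed.

Lemma inv_wrep {X} (u : word X) n : inv_word (wrep u n) = wrep (inv_word u) n.
Proof. induction n. reflexivity. rewrite wrep_S, inv_word_app, IHn, <- wrep_S_r. reflexivity. Qed.

Lemma wpow_opp {X} (u : word X) k : wpow u (- k) = inv_word (wpow u k).
Proof.
  unfold wpow. destruct k as [|p|p]; simpl.
  - reflexivity.
  - rewrite inv_wrep. reflexivity.
  - rewrite inv_wrep, inv_word_inv. reflexivity.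
Qed.

Lemma wpow_0 {X} (u : word X) : wpow u 0 = [].
Proof. reflexivity. Qed.

Lemma wpow_1 {X} (u : word X) : wpow u 1 = u.
Proof. unfold wpow; simpl. unfold wrep; simpl. apply app_nil_r. Qed.

Lemma wpow_nat {X} (u : word X) (n : nat) : wpow u (Z.of_nat n) = wrep u n.
Proof. unfold wpow. destruct (0 <=? Z.of_nat n) eqn:E. rewrite Nat2Z.id; reflexivity. apply Z.leb_gt in E; lia. Qed.

Lemma wpow_succ {X} (R : word X -> Prop) u k : weq R (wpow u (k + 1)) (wpow u k ++ u).
Proof.
  destruct (Z_le_gt_dec 0 k).
  - replace k with (Z.of_nat (Z.to_nat k)) by lia.
    replace (Z.of_nat (Z.to_nat k) + 1) with (Z.of_nat (S (Z.to_nat k))) by lia.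
    rewrite !wpow_nat, wrep_S_r. reflexivity.
  - destruct (Z.to_nat (- k - 1)) as [|n] eqn:En.
    + replace k with (-1) by lia. simpl. unfold wpow; simpl. unfold wrep; simpl.
      rewrite app_nil_r. symmetry. apply weq_inv_l.
    + assert (k = - Z.of_nat (S (S n))) as Hk by lia.
      assert (k + 1 = - Z.of_nat (S n)) as Hk1 by lia. rewrite Hk1, Hk.
      rewrite !wpow_opp, !wpow_nat, (wrep_S u (S n)), inv_word_app, <- app_assoc, weq_inv_l, app_nil_r.
      reflexivity.
Qed.

Lemma wpow_pred {X} (R : word X -> Prop) u k : weq R (wpow u (k - 1)) (wpow u k ++ inv_word u).
Proof.
  replace k with ((k - 1) + 1) at 2 by lia. rewrite wpow_succ, <- app_assoc, weq_inv_r, app_nil_r.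
  reflexivity.
Qed.

Lemma wpow_add {X} (R : word X -> Prop) u a b : weq R (wpow u a ++ wpow u b) (wpow u (a + b)).
Proof.
  revert a. induction b using Z.peano_ind; intro a.
  - rewrite wpow_0, app_nil_r, Z.add_0_r. reflexivity.
  - rewrite <- Z.add_1_r, wpow_succ, app_assoc, IHb, Z.add_assoc, wpow_succ. reflexivity.
  - rewrite <- Z.sub_1_r, wpow_pred, app_assoc, IHb, Z.add_sub_assoc, wpow_pred. reflexivity.
Qed.

#[global] Instance wpow_proper {X} (R : word X -> Prop) :
  Proper (weq R ==> eq ==> weq R) (@wpow X).
Proof.
  intros u v H k k' <-. induction k using Z.peano_ind.
  - reflexivity.
  - rewrite <- Z.add_1_r, !wpow_succ, IHk, H. reflexivity.
  - rewrite <- Z.sub_1_r, !wpow_pred, IHk, H. reflexivity.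
Qed.

Lemma wpow_mul {X} (R : word X -> Prop) u a b : weq R (wpow (wpow u a) b) (wpow u (a * b)).
Proof.
  induction b using Z.peano_ind.
  - rewrite Z.mul_0_r. reflexivity.
  - rewrite <- Z.add_1_r, wpow_succ, IHb, wpow_add. f_equiv; lia.
  - rewrite <- Z.sub_1_r, wpow_pred, IHb, <- wpow_opp, wpow_add. f_equiv; lia.
Qed.

Definition comm {X} (R : word X -> Prop) u v := weq R (u ++ v) (v ++ u).

Lemma comm_sym {X} (R : word X -> Prop) u v : comm R u v -> comm R v u.
Proof. unfold comm; intros; symmetry; auto. Qed.

Lemma comm_app {X} (R : word X -> Prop) u v w : comm R u v -> comm R u w -> comm R u (v ++ w).
Proof. unfold comm; intros H1 H2. rewrite app_assoc, H1, <- app_assoc, H2, app_assoc. reflexivity. Qed.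

Lemma comm_nil {X} (R : word X -> Prop) u : comm R u [].
Proof. unfold comm; rewrite app_nil_r; reflexivity. Qed.

Lemma comm_inv {X} (R : word X -> Prop) u v : comm R u v -> comm R u (inv_word v).
Proof. unfold comm; intro H.
  transitivity (inv_word v ++ (v ++ u) ++ inv_word v).
  - rewrite !app_assoc, weq_inv_l. simpl. reflexivity.
  - rewrite <- H, <- !app_assoc, weq_inv_r, app_nil_r. reflexivity.
Qed.

Lemma comm_wrep {X} (R : word X -> Prop) u v n : comm R u v -> comm R u (wrep v n).
Proof. intro H; induction n. apply comm_nil. rewrite wrep_S. apply comm_app; auto. Qed.

Lemma comm_wpow {X} (R : word X -> Prop) u v k : comm R u v -> comm R u (wpow v k).
Proof. intro H. unfold wpow. destruct (0 <=? k). apply comm_wrep; auto.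
  rewrite <- inv_wrep. apply comm_inv, comm_wrep; auto. Qed.

#[global] Instance comm_proper {X} (R : word X -> Prop) : Proper (weq R ==> weq R ==> iff) (comm R).
Proof. intros u u' H v v' H'. unfold comm. rewrite H, H'. reflexivity. Qed.

Lemma wpow_app_comm {X} (R : word X -> Prop) u v k : comm R u v ->
  weq R (wpow (u ++ v) k) (wpow u k ++ wpow v k).
Proof.
  intro H. induction k using Z.peano_ind.
  - reflexivity.
  - rewrite <- Z.add_1_r, !wpow_succ, IHk.
    assert (comm R (wpow v k) u) as Hc by (apply comm_sym, comm_wpow; auto).
    rewrite <- !app_assoc. f_equiv. rewrite !app_assoc. f_equiv. apply Hc.
  - rewrite <- Z.sub_1_r, !wpow_pred, IHk, inv_word_app.
    assert (comm R (wpow v k ++ inv_word v) (inv_word u)) as Hc.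
    { apply comm_inv, comm_sym, comm_app; [apply comm_wpow|apply comm_inv]; auto. }
    rewrite <- !app_assoc. f_equiv. rewrite app_assoc. apply Hc.
Qed.

Definition conj {X} (g u : word X) := g ++ u ++ inv_word g.

Lemma conj_app {X} (R : word X -> Prop) g u v : weq R (conj g (u ++ v)) (conj g u ++ conj g v).
Proof. unfold conj. rewrite <- !app_assoc. f_equiv. f_equiv. rewrite weq_cancel_l. reflexivity. Qed.

Lemma conj_inv {X} g (u : word X) : conj g (inv_word u) = inv_word (conj g u).
Proof. unfold conj. rewrite !inv_word_app, inv_word_inv, app_assoc. reflexivity. Qed.

Lemma conj_nil {X} (R : word X -> Prop) g : weq R (conj g []) [].
Proof. unfold conj; simpl; apply weq_inv_r. Qed.

#[global] Instance conj_proper {X} (R : word X -> Prop) : Proper (eq ==> weq R ==> weq R) (@conj X).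
Proof. intros g g' <- u v H. unfold conj. rewrite H. reflexivity. Qed.

Lemma conj_wrep {X} (R : word X -> Prop) g u n : weq R (conj g (wrep u n)) (wrep (conj g u) n).
Proof. induction n. apply conj_nil. rewrite !wrep_S, conj_app, IHn. reflexivity. Qed.

Lemma conj_wpow {X} (R : word X -> Prop) g u k : weq R (conj g (wpow u k)) (wpow (conj g u) k).
Proof. unfold wpow. destruct (0 <=? k). apply conj_wrep.
  rewrite <- !inv_wrep, conj_inv, conj_wrep. reflexivity. Qed.

Lemma subst_app {X Y} (f : X -> word Y) u v : subst f (u ++ v) = subst f u ++ subst f v.
Proof. unfold subst. apply flat_map_app. Qed.

Lemma subst_inv {X Y} (f : X -> word Y) u : subst f (inv_word u) = inv_word (subst f u).
Proof. induction u as [|[x b] u IH]. reflexivity.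
  rewrite inv_word_cons, subst_app, IH. change (subst f ((x,b)::u)) with
   ((if b then inv_word (f x) else f x) ++ subst f u).
  rewrite inv_word_app. f_equal. unfold subst; simpl. rewrite app_nil_r.
  destruct b; simpl; rewrite ?inv_word_inv; reflexivity. Qed.

Lemma subst_gen {X Y} (f : X -> word Y) x : subst f (gen x) = f x.
Proof. unfold subst, gen; simpl. apply app_nil_r. Qed.

Lemma subst_wrep {X Y} (f : X -> word Y) u n : subst f (wrep u n) = wrep (subst f u) n.
Proof. induction n. reflexivity. rewrite !wrep_S, subst_app, IHn. reflexivity. Qed.

Lemma subst_wpow {X Y} (f : X -> word Y) u k : subst f (wpow u k) = wpow (subst f u) k.
Proof. unfold wpow. destruct (0 <=? k). apply subst_wrep. rewrite subst_wrep, subst_inv. reflexivity. Qed.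

Definition bstate := (list (Z * bool) * Z)%type.

Definition act_a (m q : Z) (x : bstate) : bstate :=
  let (S, k) := x in
  match S with
  | (t', true) :: S' => if k mod q =? 0 then (S', t' + m * (k / q)) else ((k mod q, false) :: S, m * (k / q))
  | _ => ((k mod q, false) :: S, m * (k / q))
  end.

Definition act_ai (m q : Z) (x : bstate) : bstate :=
  let (S, k) := x in
  match S with
  | (t', false) :: S' => if k mod m =? 0 then (S', t' + q * (k / m)) else ((k mod m, true) :: S, q * (k / m))
  | _ => ((k mod m, true) :: S, q * (k / m))
  end.

Definition act_letter (m q : Z) (x : bstate) (l : letter gen2) : bstate :=
  match l with
  | (ga, false) => act_a m q x
  | (ga, true) => act_ai m q x
  | (gb, false) => (fst x, snd x + 1)
  | (gb, true) => (fst x, snd x - 1)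
  end.

Definition act (m q : Z) (x : bstate) (w : word gen2) : bstate := fold_left (act_letter m q) w x.

Definition entry_ok (m q : Z) (e : Z * bool) : Prop :=
  let (t, b) := e in if b then t mod m = t else t mod q = t.

Fixpoint adj_ok (S : list (Z * bool)) : Prop :=
  match S with
  | (t1, b1) :: ((t2, b2) :: _) as S' => (b1 = b2 \/ t1 <> 0) /\ adj_ok S'
  | _ => True
  end.

Definition normal (m q : Z) (x : bstate) : Prop := Forall (entry_ok m q) (fst x) /\ adj_ok (fst x).

Lemma act_app m q x u v : act m q x (u ++ v) = act m q (act m q x u) v.
Proof. unfold act. apply fold_left_app. Qed.

Lemma act_cons m q x l u : act m q x (l :: u) = act m q (act_letter m q x l) u.
Proof. reflexivity. Qed.

Lemma adj_ok_tail t b S : adj_ok ((t, b) :: S) -> adj_ok S.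
Proof. destruct S as [|[t2 b2] S]; simpl; tauto. Qed.

Lemma mod_small_div m t : m <> 0 -> t mod m = t -> t / m = 0.
Proof. intros Hm H. pose proof (Z.div_mod t m Hm) as E. rewrite H in E.
  assert (m * (t / m) = 0) by lia. apply Z.mul_eq_0 in H0. lia. Qed.

Lemma mod_mul_l m t : m <> 0 -> (m * t) mod m = 0.
Proof. intro. rewrite Z.mul_comm. apply Z.mod_mul; auto. Qed.

Lemma div_mul_l m t : m <> 0 -> (m * t) / m = t.
Proof. intro. rewrite Z.mul_comm. apply Z.div_mul; auto. Qed.

Lemma mod_add_l m t a : m <> 0 -> (t + m * a) mod m = t mod m.
Proof. intro. rewrite Z.mul_comm. apply Z.mod_add; auto. Qed.

Lemma div_add_l m t a : m <> 0 -> (t + m * a) / m = t / m + a.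
Proof. intro. rewrite Z.mul_comm. apply Z.div_add; auto. Qed.


Lemma act_a_normal m q x : m <> 0 -> q <> 0 -> normal m q x -> normal m q (act_a m q x).
Proof.
  intros Hm Hq [H1 H2]. destruct x as [S k]. simpl in *.
  assert (Hr : (k mod q) mod q = k mod q) by (apply Z.mod_mod; auto).
  destruct S as [|[t' b] S'].
  - split; simpl; auto.
  - destruct b.
    + destruct (k mod q =? 0) eqn:E.
      * inversion H1; subst. split; simpl; auto. eapply adj_ok_tail; eauto.
      * apply Z.eqb_neq in E. split; simpl; auto.
    + split; simpl; auto.
Qed.

Lemma act_ai_normal m q x : m <> 0 -> q <> 0 -> normal m q x -> normal m q (act_ai m q x).
Proof.
  intros Hm Hq [H1 H2]. destruct x as [S k]. simpl in *.
  assert (Hr : (k mod m) mod m = k mod m) by (apply Z.mod_mod; auto).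
  destruct S as [|[t' b] S'].
  - split; simpl; auto.
  - destruct b.
    + split; simpl; auto.
    + destruct (k mod m =? 0) eqn:E.
      * inversion H1; subst. split; simpl; auto. eapply adj_ok_tail; eauto.
      * apply Z.eqb_neq in E. split; simpl; auto.
Qed.

Lemma act_letter_normal m q x l : m <> 0 -> q <> 0 -> normal m q x -> normal m q (act_letter m q x l).
Proof.
  intros Hm Hq H. destruct l as [[] []]; simpl.
  apply act_ai_normal; auto. apply act_a_normal; auto.
  destruct x; exact H. destruct x; exact H.
Qed.

Lemma act_normal m q x w : m <> 0 -> q <> 0 -> normal m q x -> normal m q (act m q x w).
Proof. revert x; induction w; intros x Hm Hq H; simpl; auto.
  apply IHw; auto. apply act_letter_normal; auto. Qed.

Lemma act_ai_a m q x : m <> 0 -> q <> 0 -> normal m q x -> act_ai m q (act_a m q x) = x.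
Proof.
  intros Hm Hq [H1 H2]. destruct x as [S k]. simpl in *.
  pose proof (Z.div_mod k q Hq) as Ek.
  destruct S as [|[t' b] S'].
  - simpl. rewrite mod_mul_l, div_mul_l by auto. simpl. f_equal. lia.
  - destruct b.
    + destruct (k mod q =? 0) eqn:E.
      * apply Z.eqb_eq in E. inversion H1; subst. simpl in H4.
        assert (E1 : (t' + m * (k / q)) mod m = t') by (rewrite mod_add_l; auto).
        assert (E2 : (t' + m * (k / q)) / m = k / q) by (rewrite div_add_l, (mod_small_div m t'); auto).
        unfold act_ai; rewrite E1, E2.
        destruct S' as [|[t2 b2] S''].
        -- f_equal. f_equal. lia.
        -- destruct b2.
           ++ f_equal. lia.
           ++ simpl in H2. destruct H2 as [[H2|H2] _]; [discriminate|].
              apply Z.eqb_neq in H2. rewrite H2. f_equal. lia.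
      * simpl. rewrite mod_mul_l, div_mul_l by auto. simpl. f_equal. lia.
    + simpl. rewrite mod_mul_l, div_mul_l by auto. simpl. f_equal. lia.
Qed.

Lemma act_a_ai m q x : m <> 0 -> q <> 0 -> normal m q x -> act_a m q (act_ai m q x) = x.
Proof.
  intros Hm Hq [H1 H2]. destruct x as [S k]. simpl in *.
  pose proof (Z.div_mod k m Hm) as Ek.
  destruct S as [|[t' b] S'].
  - simpl. rewrite mod_mul_l, div_mul_l by auto. simpl. f_equal. lia.
  - destruct b.
    + simpl. rewrite mod_mul_l, div_mul_l by auto. simpl. f_equal. lia.
    + destruct (k mod m =? 0) eqn:E.
      * apply Z.eqb_eq in E. inversion H1; subst. simpl in H4.
        assert (E1 : (t' + q * (k / m)) mod q = t') by (rewrite mod_add_l; auto).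
        assert (E2 : (t' + q * (k / m)) / q = k / m) by (rewrite div_add_l, (mod_small_div q t'); auto).
        unfold act_a; rewrite E1, E2.
        destruct S' as [|[t2 b2] S''].
        -- f_equal. f_equal. lia.
        -- destruct b2.
           ++ simpl in H2. destruct H2 as [[H2|H2] _]; [discriminate|].
              apply Z.eqb_neq in H2. rewrite H2. f_equal. lia.
           ++ f_equal. lia.
      * simpl. rewrite mod_mul_l, div_mul_l by auto. simpl. f_equal. lia.
Qed.

Lemma act_wrep_b m q x n : act m q x (wrep (gen gb) n) = (fst x, snd x + Z.of_nat n).
Proof. revert x; induction n; intro x. destruct x; simpl; f_equal; lia.
  rewrite wrep_S. simpl. rewrite IHn. simpl. f_equal. lia. Qed.

Lemma act_wrep_bi m q x n : act m q x (wrep (inv_word (gen gb)) n) = (fst x, snd x - Z.of_nat n).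
Proof. revert x; induction n; intro x. destruct x; simpl; f_equal; lia.
  rewrite wrep_S. simpl. rewrite IHn. simpl. f_equal. lia. Qed.

Lemma act_wpow_b m q x k : act m q x (wpow (gen gb) k) = (fst x, snd x + k).
Proof. unfold wpow. destruct (0 <=? k) eqn:E.
  - rewrite act_wrep_b. f_equal. apply Z.leb_le in E. lia.
  - rewrite act_wrep_bi. f_equal. apply Z.leb_gt in E. lia. Qed.

Arguments act_a : simpl never.
Arguments act_ai : simpl never.

Lemma act_one m q y l : act m q y [l] = act_letter m q y l.
Proof. reflexivity. Qed.

Lemma act_rel m q x : m <> 0 -> q <> 0 -> normal m q x ->
  act m q x (gen ga ++ wpow (gen gb) m ++ inv_word (gen ga) ++ inv_word (wpow (gen gb) q)) = x.
Proof.
  intros Hm Hq [H1 H2]. rewrite <- wpow_opp. rewrite !act_app.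
  change (inv_word (gen ga)) with [(ga, true)]. unfold gen.
  rewrite !act_wpow_b, !act_one. simpl act_letter.
  destruct x as [S k]. simpl in *.
  pose proof (Z.div_mod k q Hq) as Ek.
  assert (Hc : forall S0, act_ai m q ((k mod q, false) :: S0, m * (k / q) + m) = (S0, k + q)).
  { intro S0. replace (m * (k / q) + m) with (m * (k/q + 1)) by ring. unfold act_ai.
    rewrite mod_mul_l, div_mul_l by auto. simpl. f_equal. lia. }
  destruct S as [|[t' b] S'].
  - replace (act_a m q ([],k)) with ([(k mod q,false)], m*(k/q)) by reflexivity.
    simpl. rewrite Hc. simpl. f_equal. lia.
  - destruct b.
    + destruct (k mod q =? 0) eqn:E.
      * replace (act_a m q ((t',true)::S',k)) with (S', t' + m*(k/q)) by (unfold act_a; rewrite E; reflexivity).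
        apply Z.eqb_eq in E. inversion H1; subst. simpl in H4. simpl.
        assert (E1 : (t' + m * (k / q) + m) mod m = t') by (replace (t' + m * (k / q) + m) with (t' + m * (k / q + 1)) by ring; rewrite mod_add_l; auto).
        assert (E2 : (t' + m * (k / q) + m) / m = k / q + 1) by (replace (t' + m * (k / q) + m) with (t' + m * (k / q + 1)) by ring; rewrite div_add_l, (mod_small_div m t'); auto).
        unfold act_ai; rewrite E1, E2.
        destruct S' as [|[t2 b2] S''].
        -- simpl. f_equal. lia.
        -- destruct b2.
           ++ simpl. f_equal. lia.
           ++ simpl in H2. destruct H2 as [[H2|H2] _]; [discriminate|].
              apply Z.eqb_neq in H2. rewrite H2. simpl. f_equal. lia.
      * replace (act_a m q ((t',true)::S',k)) with ((k mod q,false)::(t',true)::S', m*(k/q)) by (unfold act_a; rewrite E; reflexivity).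
        simpl. rewrite Hc. simpl. f_equal. lia.
    + replace (act_a m q ((t',false)::S',k)) with ((k mod q,false)::(t',false)::S', m*(k/q)) by reflexivity.
      simpl. rewrite Hc. simpl. f_equal. lia.
Qed.

Lemma weq_act m q u v : m <> 0 -> q <> 0 -> weq (BS_rel m q) u v ->
  forall y, normal m q y -> act m q y u = act m q y v.
Proof.
  intros Hm Hq H. induction H; intros y Hy.
  - reflexivity.
  - symmetry; auto.
  - rewrite IHweq1, IHweq2; auto.
  - rewrite !act_app, IHweq1 by auto. apply IHweq2. apply act_normal; auto.
  - destruct x as [[] []]; simpl.
    + apply act_a_ai; auto.
    + apply act_ai_a; auto.
    + destruct y; simpl; f_equal; lia.
    + destruct y; simpl; f_equal; lia.
  - unfold BS_rel in H. subst. apply act_rel; auto.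
Qed.

Lemma BS_ker_act m q w : m <> 0 -> q <> 0 -> BS_ker m q w -> act m q ([], 0) w = ([], 0).
Proof. intros Hm Hq H. apply (weq_act m q w [] Hm Hq H). split; simpl; auto. Qed.

Fixpoint tailword (L : list (bool * Z)) : word gen2 :=
  match L with
  | [] => []
  | (e, v) :: L' => (ga, e) :: wpow (gen gb) v ++ tailword L'
  end.

Definition iword (k0 : Z) (L : list (bool * Z)) : word gen2 := wpow (gen gb) k0 ++ tailword L.

Fixpoint pfB (m q : Z) (L : list (bool * Z)) : Prop :=
  match L with
  | (e, v) :: (((e', _) :: _) as L') => (e = e' \/ v mod (if e then q else m) <> 0) /\ pfB m q L'
  | _ => True
  end.

Definition good (m q : Z) (e : bool) (x : bstate) : Prop :=
  (exists t S', fst x = (t, e) :: S') /\ (snd x) mod (if e then q else m) = 0.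

Lemma mod_add_zero K v q : q <> 0 -> K mod q = 0 -> (K + v) mod q = v mod q.
Proof. intros Hq H. rewrite Z.add_mod, H by auto. rewrite Z.add_0_l. apply Z.mod_mod; auto. Qed.

Lemma good_step m q e e' x v : m <> 0 -> q <> 0 -> good m q e x ->
  (e = e' \/ v mod (if e then q else m) <> 0) ->
  good m q e' (act_letter m q (fst x, snd x + v) (ga, e')) /\
  length (fst (act_letter m q (fst x, snd x + v) (ga, e'))) = S (length (fst x)).
Proof.
  intros Hm Hq [[t [S' HS]] HK] Hp. destruct x as [S k]. simpl in *. subst S.
  destruct e, e'; simpl act_letter.
  - replace (act_ai m q ((t,true)::S', k + v)) with (((k+v) mod m, true)::(t,true)::S', q * ((k+v)/m)) by reflexivity.
    split; [split; [simpl; eauto| simpl; apply mod_mul_l; auto] | reflexivity].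
  - destruct Hp as [Hp|Hp]; [discriminate|].
    assert (E : (k + v) mod q <> 0) by (rewrite mod_add_zero; auto).
    apply Z.eqb_neq in E.
    replace (act_a m q ((t,true)::S', k + v)) with (((k+v) mod q, false)::(t,true)::S', m * ((k+v)/q)) by (unfold act_a; rewrite E; reflexivity).
    split; [split; [simpl; eauto| simpl; apply mod_mul_l; auto] | reflexivity].
  - destruct Hp as [Hp|Hp]; [discriminate|].
    assert (E : (k + v) mod m <> 0) by (rewrite mod_add_zero; auto).
    apply Z.eqb_neq in E.
    replace (act_ai m q ((t,false)::S', k + v)) with (((k+v) mod m, true)::(t,false)::S', q * ((k+v)/m)) by (unfold act_ai; rewrite E; reflexivity).
    split; [split; [simpl; eauto| simpl; apply mod_mul_l; auto] | reflexivity].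
  - replace (act_a m q ((t,false)::S', k + v)) with (((k+v) mod q, false)::(t,false)::S', m * ((k+v)/q)) by reflexivity.
    split; [split; [simpl; eauto| simpl; apply mod_mul_l; auto] | reflexivity].
Qed.

Lemma britton_tail m q : m <> 0 -> q <> 0 -> forall L e v x, good m q e x -> pfB m q ((e, v) :: L) ->
  length (fst (act m q x (wpow (gen gb) v ++ tailword L))) = (length (fst x) + length L)%nat.
Proof.
  intros Hm Hq. induction L as [|[e' v'] L IH]; intros e v x Hg Hp.
  - simpl. rewrite app_nil_r, act_wpow_b. simpl. lia.
  - simpl tailword. rewrite act_app, act_wpow_b, act_cons.
    simpl in Hp. destruct Hp as [Hp1 Hp2].
    destruct (good_step m q e e' x v Hm Hq Hg Hp1) as [Hg' Hl].
    rewrite IH with (e := e'); auto. rewrite Hl. simpl. lia.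
Qed.

Lemma britton m q k0 L : m <> 0 -> q <> 0 -> L <> [] -> pfB m q L ->
  act m q ([], 0) (iword k0 L) <> ([], 0).
Proof.
  intros Hm Hq HL Hp. destruct L as [|[e v] L]; [congruence|].
  unfold iword. simpl tailword. rewrite act_app, act_wpow_b, act_cons. simpl fst; simpl snd.
  assert (Hg : good m q e (act_letter m q ([], 0 + k0) (ga, e))).
  { destruct e; simpl act_letter.
    - replace (act_ai m q ([], 0 + k0)) with ([((0+k0) mod m, true)], q * ((0+k0)/m)) by reflexivity.
      split; [simpl; eauto | simpl; apply mod_mul_l; auto].
    - replace (act_a m q ([], 0 + k0)) with ([((0+k0) mod q, false)], m * ((0+k0)/q)) by reflexivity.
      split; [simpl; eauto | simpl; apply mod_mul_l; auto]. }
  intro Heq. pose proof (britton_tail m q Hm Hq L e v _ Hg Hp) as Hl.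
  rewrite Heq in Hl. destruct Hg as [[t [S' HS]] _]. rewrite HS in Hl. simpl in Hl. lia.
Qed.

Lemma weq_of_rel {X} (R : word X -> Prop) u v : weq R (u ++ inv_word v) [] -> weq R u v.
Proof. intro H. transitivity ((u ++ inv_word v) ++ v).
  - rewrite <- app_assoc, weq_inv_l, app_nil_r. reflexivity.
  - rewrite H. reflexivity. Qed.

Lemma comm_conj {X} (R : word X -> Prop) g u v : comm R u v -> comm R (conj g u) (conj g v).
Proof. unfold comm. intro H. rewrite <- !conj_app, H. reflexivity. Qed.

Definition eT (i : nat) : word genT := gen (tE i).
Definition tA_w : word genT := gen tA.

Fixpoint vword (off : nat) (v : list Z) : word genT :=
  match v with
  | [] => []
  | c :: v' => wpow (eT off) c ++ vword (S off) v'
  end.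

Fixpoint vadd (v w : list Z) : list Z :=
  match v, w with
  | [], w => w
  | v, [] => v
  | a :: v', b :: w' => (a + b) :: vadd v' w'
  end.

Definition hd0 (v : list Z) : Z := match v with [] => 0 | c :: _ => c end.

Lemma vadd_nil_r v : vadd v [] = v.
Proof. destruct v; reflexivity. Qed.


Lemma comm_ee m r i j : comm (tBS_rel m r) (eT i) (eT j).
Proof.
  unfold comm. apply weq_of_rel. rewrite inv_word_app, !app_assoc.
  apply weq_rel. left. exists i, j. unfold eT. rewrite <- !app_assoc. reflexivity.
Qed.

Lemma comm_e_vword m r i off v : comm (tBS_rel m r) (eT i) (vword off v).
Proof. revert off; induction v; intro off; simpl. apply comm_nil.
  apply comm_app; auto. apply comm_wpow, comm_ee. Qed.

Lemma vword_add m r off v w :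
  weq (tBS_rel m r) (vword off v ++ vword off w) (vword off (vadd v w)).
Proof.
  revert off w. induction v as [|a v IH]; intros off w.
  - reflexivity.
  - destruct w as [|b w].
    + simpl. rewrite app_nil_r. reflexivity.
    + simpl. rewrite <- wpow_add, <- !app_assoc. f_equiv.
      rewrite !app_assoc.
      assert (comm (tBS_rel m r) (vword (S off) v) (wpow (eT off) b)) as Hc.
      { apply comm_sym. apply comm_sym, comm_wpow, comm_sym, comm_e_vword. }
      unfold comm in Hc. rewrite Hc, <- !app_assoc. f_equiv. apply IH.
Qed.

Definition zT : word genT := conj tA_w (eT 0).

Lemma rel_e1 m r : weq (tBS_rel m r) (conj tA_w (wpow (eT 0) m)) (eT 1).
Proof. apply weq_of_rel. apply weq_rel. right; left. unfold conj, tA_w, eT. rewrite <- !app_assoc. reflexivity. Qed.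

Lemma rel_ei m r i : (1 <= i)%nat ->
  weq (tBS_rel m r) (conj tA_w (eT i ++ wpow (eT 0) (- r i))) (eT (S i)).
Proof. intro Hi. apply weq_of_rel. apply weq_rel. right; right. exists i. split; auto.
  unfold conj, tA_w, eT. rewrite <- !app_assoc. reflexivity. Qed.

Lemma conj_ei m r i : (1 <= i)%nat ->
  weq (tBS_rel m r) (conj tA_w (eT i)) (eT (S i) ++ wpow zT (r i)).
Proof. intro Hi. rewrite <- (rel_ei m r i Hi), conj_app, conj_wpow. fold zT.
  rewrite <- app_assoc, wpow_add, Z.add_opp_diag_l, wpow_0, app_nil_r. reflexivity. Qed.

Lemma comm_z_e m r j : (1 <= j)%nat -> comm (tBS_rel m r) zT (eT j).
Proof. intro Hj. destruct j as [|[|i]]; [lia| |].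
 - rewrite <- (rel_e1 m r). unfold zT. apply comm_conj. apply comm_wpow, comm_ee.
 - rewrite <- (rel_ei m r (S i)) by lia. unfold zT. apply comm_conj, comm_app; [apply comm_ee | apply comm_wpow, comm_ee].
Qed.

Lemma comm_z_vword m r off v : (1 <= off)%nat -> comm (tBS_rel m r) zT (vword off v).
Proof. revert off; induction v; intros off Hoff; simpl. apply comm_nil.
  apply comm_app. apply comm_wpow, comm_z_e; auto. apply IHv; lia. Qed.

Fixpoint rsum (r : nat -> Z) (off : nat) (v : list Z) : Z :=
  match v with [] => 0 | c :: v' => c * r off + rsum r (S off) v' end.

Lemma conj_vword m r off v : (1 <= off)%nat ->
  weq (tBS_rel m r) (conj tA_w (vword off v)) (wpow zT (rsum r off v) ++ vword (S off) v).
Proof.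
  revert off; induction v as [|c v IH]; intros off Hoff; simpl.
  - apply conj_nil.
  - rewrite conj_app, conj_wpow, conj_ei by auto. rewrite IH by lia.
    assert (Hc : comm (tBS_rel m r) (eT (S off)) zT) by (apply comm_sym, comm_z_e; lia).
    rewrite wpow_app_comm by (apply comm_wpow; auto).
    rewrite wpow_mul.
    replace (c * r off + rsum r (S off) v) with (r off * c + rsum r (S off) v) by ring.
    assert (Hc2 : comm (tBS_rel m r) (wpow zT (r off * c + rsum r (S off) v)) (wpow (eT (S off)) c)).
    { apply comm_wpow, comm_sym, comm_wpow; auto. }
    unfold comm in Hc2.
    transitivity (wpow (eT (S off)) c ++ (wpow zT (r off * c) ++ wpow zT (rsum r (S off) v)) ++ vword (S (S off)) v).
    + rewrite <- !app_assoc. reflexivity.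
    + rewrite wpow_add, app_assoc, <- Hc2, <- app_assoc. reflexivity.
Qed.

Definition res (r : nat -> Z) (v : list Z) : Z := hd0 v + rsum r 1 (tl v).
Definition phi (m : Z) (r : nat -> Z) (v : list Z) : list Z := 0 :: (res r v / m) :: tl v.
Definition phiinv (m : Z) (r : nat -> Z) (v : list Z) : list Z :=
  (m * hd0 (tl v) - rsum r 1 (tl (tl v))) :: tl (tl v).

Lemma vword_hd v off : vword off v = vword off (hd0 v :: tl v).
Proof. destruct v; reflexivity. Qed.

Lemma T_phi m r v : m <> 0 -> res r v mod m = 0 ->
  weq (tBS_rel m r) (conj tA_w (vword 0 v)) (vword 0 (phi m r v)).
Proof.
  intros Hm Hres. rewrite (vword_hd v 0). simpl vword.
  rewrite conj_app, conj_wpow, conj_vword by lia. fold zT. rewrite app_assoc, wpow_add.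
  change (hd0 v + rsum r 1 (tl v)) with (res r v).
  pose proof (Z.div_mod (res r v) m Hm) as E. rewrite Hres, Z.add_0_r in E.
  rewrite E at 1. rewrite <- wpow_mul. unfold zT. rewrite <- conj_wpow, rel_e1.
  unfold phi. simpl vword. reflexivity.
Qed.

Lemma inv_tA : inv_word tA_w = [(tA, true)].
Proof. reflexivity. Qed.

Lemma T_phiinv m r v : m <> 0 -> hd0 v = 0 ->
  weq (tBS_rel m r) ([(tA, true)] ++ vword 0 v ++ [(tA, false)]) (vword 0 (phiinv m r v)).
Proof.
  intros Hm Hv.
  assert (E1 : res r (phiinv m r v) = m * hd0 (tl v)) by (unfold res, phiinv; simpl; ring).
  assert (E2 : res r (phiinv m r v) mod m = 0) by (rewrite E1, Z.mul_comm; apply Z.mod_mul; auto).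
  assert (E3 : vword 0 (phi m r (phiinv m r v)) = vword 0 v).
  { unfold phi. rewrite E1, Z.mul_comm, Z.div_mul by auto.
    destruct v as [|c [|d v]]; simpl in Hv |- *; subst; reflexivity. }
  rewrite <- E3, <- T_phi by auto. unfold conj. rewrite inv_tA.
  rewrite <- !app_assoc. etransitivity. apply (weq_cancel_l _ tA_w). simpl.
  assert (H : weq (tBS_rel m r) [(tA,true);(tA,false)] []) by apply (weq_cancel _ (tA,true)).
  rewrite H, app_nil_r. reflexivity.
Qed.

Fixpoint ttail (L : list (bool * list Z)) : word genT :=
  match L with [] => [] | (e, v) :: L' => (tA, e) :: vword 0 v ++ ttail L' end.
Definition tword (v0 : list Z) (L : list (bool * list Z)) : word genT := vword 0 v0 ++ ttail L.

Definition pinchb (m : Z) (r : nat -> Z) (e e' : bool) (v : list Z) : bool :=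
  if Bool.eqb e e' then false else if e then (hd0 v =? 0) else (res r v mod m =? 0).
Definition contract (m : Z) (r : nat -> Z) (e : bool) (v : list Z) : list Z :=
  if e then phiinv m r v else phi m r v.

Lemma contract_weq m r e e' v : m <> 0 -> pinchb m r e e' v = true ->
  weq (tBS_rel m r) ((tA, e) :: vword 0 v ++ [(tA, e')]) (vword 0 (contract m r e v)).
Proof.
  intros Hm H. unfold pinchb, contract in *. destruct e, e'; simpl in H; try discriminate.
  - apply Z.eqb_eq in H. apply (T_phiinv m r v Hm H).
  - apply Z.eqb_eq in H. apply (T_phi m r v Hm H).
Qed.

Fixpoint red1 (m : Z) (r : nat -> Z) (p : list Z) (L : list (bool * list Z))
  : option (list Z * list (bool * list Z)) :=
  match L with
  | (e, v) :: L' =>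
    match L' with
    | (e', v') :: L'' =>
        if pinchb m r e e' v then Some (vadd p (vadd (contract m r e v) v'), L'')
        else match red1 m r v L' with
             | Some (p', L2) => Some (p, (e, p') :: L2)
             | None => None
             end
    | [] => None
    end
  | [] => None
  end.

Fixpoint pfT (m : Z) (r : nat -> Z) (L : list (bool * list Z)) : Prop :=
  match L with
  | (e, v) :: (((e', _) :: _) as L') => pinchb m r e e' v = false /\ pfT m r L'
  | _ => True
  end.

Lemma red1_weq m r : m <> 0 -> forall L p p' L', red1 m r p L = Some (p', L') ->
  weq (tBS_rel m r) (tword p L) (tword p' L').
Proof.
  intro Hm. induction L as [|[e v] L IH]; intros p p' L' H; simpl in H; [discriminate|].
  destruct L as [|[e' v'] L'']; [discriminate|].
  destruct (pinchb m r e e' v) eqn:Ep.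
  - injection H as <- <-. unfold tword. simpl ttail.
    replace ((tA, e) :: vword 0 v ++ (tA, e') :: vword 0 v' ++ ttail L'')
      with (((tA, e) :: vword 0 v ++ [(tA, e')]) ++ vword 0 v' ++ ttail L'')
      by (simpl; rewrite <- app_assoc; reflexivity).
    rewrite contract_weq by auto.
    rewrite (app_assoc (vword 0 (contract m r e v))), vword_add, app_assoc, vword_add. reflexivity.
  - destruct (red1 m r v ((e', v') :: L'')) as [[p2 L2]|] eqn:E; [|discriminate].
    injection H as <- <-. apply IH in E. unfold tword in *.
    change (ttail ((e, v) :: (e', v') :: L'')) with ((tA, e) :: (vword 0 v ++ ttail ((e', v') :: L''))).
    change (ttail ((e, p2) :: L2)) with ((tA, e) :: (vword 0 p2 ++ ttail L2)).
    rewrite E. reflexivity.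
Qed.

Lemma red1_len m r : forall L p p' L', red1 m r p L = Some (p', L') -> length L = S (S (length L')).
Proof.
  induction L as [|[e v] L IH]; intros p p' L' H; simpl in H; [discriminate|].
  destruct L as [|[e' v'] L'']; [discriminate|].
  destruct (pinchb m r e e' v) eqn:Ep.
  - injection H as <- <-. reflexivity.
  - destruct (red1 m r v ((e', v') :: L'')) as [[p2 L2]|] eqn:E; [|discriminate].
    injection H as <- <-. apply IH in E. simpl in *. lia.
Qed.

Lemma red1_none m r : forall L p, red1 m r p L = None -> pfT m r L.
Proof.
  induction L as [|[e v] L IH]; intros p H; simpl in H |- *; auto.
  destruct L as [|[e' v'] L'']; auto.
  destruct (pinchb m r e e' v) eqn:Ep; [discriminate|].
  destruct (red1 m r v ((e', v') :: L'')) as [[p2 L2]|] eqn:E; [discriminate|].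
  split; auto. apply (IH v E).
Qed.

Fixpoint red (m : Z) (r : nat -> Z) (n : nat) (p : list Z) (L : list (bool * list Z)) :=
  match n with
  | O => (p, L)
  | S n' => match red1 m r p L with Some (p', L') => red m r n' p' L' | None => (p, L) end
  end.

Lemma red_weq m r : m <> 0 -> forall n p L, weq (tBS_rel m r) (tword p L) (tword (fst (red m r n p L)) (snd (red m r n p L))).
Proof.
  intros Hm n. induction n; intros p L; simpl. reflexivity.
  destruct (red1 m r p L) as [[p' L']|] eqn:E; simpl.
  - rewrite (red1_weq m r Hm L p p' L' E). apply IHn.
  - reflexivity.
Qed.

Lemma red_pf m r : forall n p L, (length L <= n)%nat -> pfT m r (snd (red m r n p L)).
Proof.
  induction n; intros p L Hl; simpl.
  - destruct L; [simpl; auto| simpl in Hl; lia].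
  - destruct (red1 m r p L) as [[p' L']|] eqn:E.
    + apply IHn. apply red1_len in E. lia.
    + eapply red1_none; eauto.
Qed.

Definition vbound (B : nat) (p : list Z) (L : list (bool * list Z)) : Prop :=
  (length p <= B)%nat /\ Forall (fun x => (length (snd x) <= B)%nat) L.

Lemma vadd_len v w : length (vadd v w) = Nat.max (length v) (length w).
Proof. revert w; induction v; intros [|b w]; simpl; auto. Qed.

Lemma contract_len m r e v : (length (contract m r e v) <= Nat.max 2 (S (length v)))%nat.
Proof. unfold contract, phi, phiinv. destruct e; destruct v as [|c [|d v]]; simpl; lia. Qed.

Lemma red1_bound m r B : forall L p p' L', red1 m r p L = Some (p', L') -> vbound B p L -> vbound (Nat.max 2 (S B)) p' L'.
Proof.
  induction L as [|[e v] L IH]; intros p p' L' H HB; simpl in H; [discriminate|].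
  destruct L as [|[e' v'] L'']; [discriminate|].
  destruct HB as [Hp HL]. inversion HL as [|? ? Hv HL1]; subst. inversion HL1 as [|? ? Hv' HL2]; subst.
  simpl in Hv, Hv'.
  destruct (pinchb m r e e' v) eqn:Ep.
  - injection H as <- <-. split.
    + rewrite !vadd_len. pose proof (contract_len m r e v). lia.
    + eapply Forall_impl; [|exact HL2]. intros [? ?] Hx; cbn [snd] in *; lia.
  - destruct (red1 m r v ((e', v') :: L'')) as [[p2 L2]|] eqn:E; [|discriminate].
    injection H as <- <-. apply IH in E; [|split; auto]. destruct E as [E1 E2].
    split; [lia|]. constructor; auto.
Qed.

Lemma red_bound m r : forall n B p L, vbound B p L -> (1 <= B)%nat ->
  vbound (B + n) (fst (red m r n p L)) (snd (red m r n p L)).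
Proof.
  induction n; intros B p L HB HB1; simpl.
  - rewrite Nat.add_0_r; auto.
  - destruct (red1 m r p L) as [[p' L']|] eqn:E; simpl.
    + apply (red1_bound m r B) in E; auto. replace (B + S n)%nat with (S B + n)%nat by lia.
      replace (Nat.max 2 (S B)) with (S B) in E by lia. apply IHn; auto; lia.
    + destruct HB as [H1 H2]. split; [lia|]. eapply Forall_impl; [|exact H2]. intros; simpl in *; lia.
Qed.

Definition exact_s (m q : Z) (r : nat -> Z) (s : nat -> Z) (H : nat) : Prop :=
  s O = 1 /\ forall i, (i < H)%nat -> m * s (S i) = q * s i - r (S i).

Definition beta (q : Z) (s : nat -> Z) (i : nat) : Z := match i with O => 1 | S j => q * s j end.

Fixpoint psio (q : Z) (s : nat -> Z) (off : nat) (v : list Z) : Z :=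
  match v with [] => 0 | c :: v' => c * beta q s off + psio q s (S off) v' end.
Definition psi q s v := psio q s 0 v.

Fixpoint sig (s : nat -> Z) (off : nat) (v : list Z) : Z :=
  match v with [] => 0 | c :: v' => c * s off + sig s (S off) v' end.

Lemma psio_S q s off v : psio q s (S off) v = q * sig s off v.
Proof. revert off; induction v as [|c v IH]; intro off; simpl. ring. rewrite IH. simpl. ring. Qed.

Lemma psio_rsum m q r s H : exact_s m q r s H -> forall v off, (1 <= off)%nat -> (off + length v <= S H)%nat ->
  psio q s off v - rsum r off v = m * sig s off v.
Proof.
  intros [Hs0 Hs] v. induction v as [|c v IH]; intros off H1 H2; simpl. ring.
  simpl in H2. destruct off as [|j]; [lia|]. simpl beta.
  assert (E : m * s (S j) = q * s j - r (S j)) by (apply Hs; lia).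
  specialize (IH (S (S j)) ltac:(lia) ltac:(lia)).
  transitivity (c * (q * s j - r (S j)) + (psio q s (S (S j)) v - rsum r (S (S j)) v)); [ring|].
  rewrite IH, <- E. ring.
Qed.

Lemma psio_vadd q s : forall v w off, psio q s off (vadd v w) = psio q s off v + psio q s off w.
Proof. induction v; intros [|b w] off; simpl; try ring. rewrite IHv. ring. Qed.

Lemma psi_hd q s v : psi q s v = hd0 v + psio q s 1 (tl v).
Proof. destruct v; unfold psi; simpl; ring. Qed.

Lemma psi_phi m q r s H v : exact_s m q r s H -> (length v <= S H)%nat -> m <> 0 -> res r v mod m = 0 ->
  psi q s v = m * (res r v / m + sig s 1 (tl v)) /\
  psi q s (phi m r v) = q * (res r v / m + sig s 1 (tl v)).
Proof.
  intros Hex Hl Hm Hr. split.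
  - rewrite psi_hd. pose proof (psio_rsum m q r s H Hex (tl v) 1) as E.
    assert (Hl' : (1 + length (tl v) <= S H)%nat) by (destruct v; simpl in *; lia).
    specialize (E (le_n 1) Hl'). pose proof (Z.div_mod (res r v) m Hm) as E2. rewrite Hr in E2.
    unfold res in *. lia.
  - unfold phi, psi. simpl. rewrite psio_S. destruct Hex as [Hs0 _]. rewrite Hs0. ring.
Qed.

Lemma psi_phiinv m q r s H v : exact_s m q r s H -> (length v <= S H)%nat ->
  psi q s v = hd0 v + q * (hd0 (tl v) + sig s 1 (tl (tl v))) /\
  psi q s (phiinv m r v) = m * (hd0 (tl v) + sig s 1 (tl (tl v))).
Proof.
  intros Hex Hl. destruct Hex as [Hs0 Hs] eqn:Hex'. split.
  - rewrite psi_hd, psio_S. destruct v as [|c [|d v]]; simpl; rewrite ?Hs0; ring.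
  - unfold phiinv, psi. simpl. pose proof (psio_rsum m q r s H Hex (tl (tl v)) 1) as E.
    assert (Hl' : (1 + length (tl (tl v)) <= S H)%nat) by (destruct v as [|c [|d v]]; simpl in *; lia).
    specialize (E (le_n 1) Hl'). lia.
Qed.

Lemma BS_conj_a m q K : weq (BS_rel m q) ([(ga, false)] ++ wpow (gen gb) (m * K) ++ [(ga, true)]) (wpow (gen gb) (q * K)).
Proof.
  assert (H : weq (BS_rel m q) (conj (gen ga) (wpow (gen gb) m)) (wpow (gen gb) q)).
  { apply weq_of_rel. apply weq_rel. unfold BS_rel, conj. rewrite <- !app_assoc. reflexivity. }
  change ([(ga, false)] ++ wpow (gen gb) (m * K) ++ [(ga, true)]) with (conj (gen ga) (wpow (gen gb) (m * K))).
  rewrite <- wpow_mul, conj_wpow, H, wpow_mul. reflexivity.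
Qed.

Lemma BS_conj_ai m q K : weq (BS_rel m q) ([(ga, true)] ++ wpow (gen gb) (q * K) ++ [(ga, false)]) (wpow (gen gb) (m * K)).
Proof.
  rewrite <- BS_conj_a. simpl.
  assert (H1 : weq (BS_rel m q) [(ga,true);(ga,false)] []) by apply (weq_cancel _ (ga,true)).
  assert (H2 : weq (BS_rel m q) [(ga,false);(ga,true)] []) by apply (weq_cancel _ (ga,false)).
  rewrite <- app_assoc.
  change ((ga, true) :: (ga, false) :: wpow (gen gb) (m * K) ++ [(ga, true)] ++ [(ga, false)])
    with ([(ga,true);(ga,false)] ++ wpow (gen gb) (m * K) ++ [(ga,true);(ga,false)]).
  rewrite !H1, app_nil_r. reflexivity.
Qed.

Definition psiL q s (L : list (bool * list Z)) : list (bool * Z) := map (fun x => (fst x, psi q s (snd x))) L.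

Lemma contract_BS m q r s H e e' v : exact_s m q r s H -> (length v <= S H)%nat -> m <> 0 ->
  pinchb m r e e' v = true ->
  weq (BS_rel m q) ((ga, e) :: wpow (gen gb) (psi q s v) ++ [(ga, e')]) (wpow (gen gb) (psi q s (contract m r e v))).
Proof.
  intros Hex Hl Hm Hp. unfold pinchb, contract in *. destruct e, e'; simpl in Hp; try discriminate.
  - apply Z.eqb_eq in Hp. destruct (psi_phiinv m q r s H v Hex Hl) as [E1 E2].
    rewrite E1, E2, Hp, Z.add_0_l. apply BS_conj_ai.
  - apply Z.eqb_eq in Hp. destruct (psi_phi m q r s H v Hex Hl Hm Hp) as [E1 E2].
    rewrite E1, E2. apply BS_conj_a.
Qed.

Lemma red1_BS m q r s H : exact_s m q r s H -> m <> 0 -> forall L p p' L', red1 m r p L = Some (p', L') ->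
  vbound (S H) p L ->
  weq (BS_rel m q) (iword (psi q s p) (psiL q s L)) (iword (psi q s p') (psiL q s L')).
Proof.
  intros Hex Hm. induction L as [|[e v] L IH]; intros p p' L' Hr HB; simpl in Hr; [discriminate|].
  destruct L as [|[e' v'] L'']; [discriminate|].
  destruct HB as [Hp HL]. inversion HL as [|? ? Hv HL1]; subst. simpl in Hv.
  destruct (pinchb m r e e' v) eqn:Ep.
  - injection Hr as <- <-. unfold iword. simpl psiL. simpl tailword. simpl fst; simpl snd.
    replace ((ga, e) :: wpow (gen gb) (psi q s v) ++ (ga, e') :: wpow (gen gb) (psi q s v') ++ tailword (psiL q s L''))
      with (((ga, e) :: wpow (gen gb) (psi q s v) ++ [(ga, e')]) ++ wpow (gen gb) (psi q s v') ++ tailword (psiL q s L''))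
      by (simpl; rewrite <- app_assoc; reflexivity).
    rewrite (contract_BS m q r s H e e' v Hex Hv Hm Ep).
    rewrite (app_assoc (wpow (gen gb) (psi q s (contract m r e v)))), wpow_add, app_assoc, wpow_add.
    unfold psi. rewrite !psio_vadd. reflexivity.
  - destruct (red1 m r v ((e', v') :: L'')) as [[p2 L2]|] eqn:E; [|discriminate].
    injection Hr as <- <-. apply IH in E; [|split; auto].
    unfold iword in *. simpl psiL. simpl tailword. simpl fst; simpl snd.
    change (psiL q s ((e', v') :: L'')) with ((e', psi q s v') :: psiL q s L'') in E.
    rewrite E. reflexivity.
Qed.

Lemma vbound_mono B B' p L : (B <= B')%nat -> vbound B p L -> vbound B' p L.
Proof. intros Hb [H1 H2]. split; [lia|]. eapply Forall_impl; [|exact H2]. intros x Hx; cbv beta in *; lia. Qed.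

Lemma red_BS m q r s H : exact_s m q r s H -> m <> 0 -> forall n B p L, vbound B p L -> (1 <= B)%nat ->
  (B + n <= S H)%nat ->
  weq (BS_rel m q) (iword (psi q s p) (psiL q s L))
      (iword (psi q s (fst (red m r n p L))) (psiL q s (snd (red m r n p L)))).
Proof.
  intros Hex Hm n. induction n; intros B p L HB HB1 HBH; simpl. reflexivity.
  destruct (red1 m r p L) as [[p' L']|] eqn:E; simpl; [|reflexivity].
  pose proof E as E'. apply (red1_bound m r B) in E'; auto.
  rewrite (red1_BS m q r s H Hex Hm L p p' L' E) by (apply (vbound_mono B); auto; lia).
  apply (IHn (S B)); auto. replace (S B) with (Nat.max 2 (S B)) by lia. auto. lia.
Qed.

Lemma psi_res m q r s H v : exact_s m q r s H -> (length v <= S H)%nat ->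
  psi q s v = res r v + m * sig s 1 (tl v).
Proof.
  intros Hex Hl. rewrite psi_hd. pose proof (psio_rsum m q r s H Hex (tl v) 1) as E.
  assert (Hl' : (1 + length (tl v) <= S H)%nat) by (destruct v; simpl in *; lia).
  specialize (E (le_n 1) Hl'). unfold res. lia.
Qed.

Lemma small_mod a q : 0 < Z.abs a < Z.abs q -> a mod q <> 0.
Proof.
  intros [H1 H2] H. assert (Hq : q <> 0) by lia.
  pose proof (Z.div_mod a q Hq) as E. rewrite H, Z.add_0_r in E.
  assert (Z.abs a = Z.abs q * Z.abs (a / q)) by (rewrite E at 1; apply Z.abs_mul).
  assert (a / q <> 0) by (intro Hz; rewrite Hz in E; lia).
  assert (1 <= Z.abs (a / q)) by lia. nia.
Qed.

Lemma pf_transfer m q r s H : exact_s m q r s H -> m <> 0 -> forall L, pfT m r L ->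
  Forall (fun x => (length (snd x) <= S H)%nat) L ->
  Forall (fun x => Z.abs (hd0 (snd x)) < Z.abs q) L -> pfB m q (psiL q s L).
Proof.
  intros Hex Hm. induction L as [|[e v] L IH]; intros Hp Hl Hh; simpl; auto.
  destruct L as [|[e' v'] L'']; simpl; auto.
  inversion Hl; subst. inversion Hh; subst. simpl in *. destruct Hp as [Hp1 Hp2].
  split; [|apply IH; auto].
  unfold pinchb in Hp1. destruct e, e'; simpl in Hp1; auto; right.
  - apply Z.eqb_neq in Hp1. destruct (psi_phiinv m q r s H v Hex H2) as [E1 _].
    rewrite E1, mod_add_l by lia. apply small_mod. lia.
  - apply Z.eqb_neq in Hp1. rewrite (psi_res m q r s H v Hex H2), mod_add_l; auto.
Qed.

Fixpoint gbnd (ma : Z) (n : nat) (C : Z) : Z :=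
  match n with O => C | S n' => gbnd ma n' (ma * (Z.of_nat n' + 3) * C) end.

Lemma gbnd_ge ma n C : 0 <= C -> 1 <= ma -> C <= gbnd ma n C.
Proof. revert C; induction n; intros C HC Hma; simpl. lia.
  assert (C <= ma * (Z.of_nat n + 3) * C) by nia.
  specialize (IHn (ma * (Z.of_nat n + 3) * C)). lia. Qed.

Lemma rsum_bound m r C : (forall i, 0 <= r (S i) < Z.abs m) -> 0 <= C -> forall v off, (1 <= off)%nat ->
  Forall (fun c => Z.abs c <= C) v -> Z.abs (rsum r off v) <= Z.of_nat (length v) * C * Z.abs m.
Proof.
  intros Hr HC. induction v as [|c v IH]; intros off Hoff Hv; cbn [rsum]. simpl. lia.
  change (length (c :: v)) with (S (length v)).
  inversion Hv; subst. specialize (IH (S off) ltac:(lia) H2).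
  destruct off as [|j]; [lia|]. specialize (Hr j).
  assert (Z.abs (c * r (S j)) <= C * Z.abs m) by (rewrite Z.abs_mul; nia). rewrite Nat2Z.inj_succ. nia.
Qed.

Lemma Forall_tl {A} (P : A -> Prop) v : Forall P v -> Forall P (tl v).
Proof. destruct v; simpl; auto. intro H; inversion H; auto. Qed.

Lemma hd0_bound C v : 0 <= C -> Forall (fun c => Z.abs c <= C) v -> Z.abs (hd0 v) <= C.
Proof. destruct v; simpl; intros; [lia|]. inversion H0; auto. Qed.

Lemma rsum_zero r : forall v off, Forall (fun c => c = 0) v -> rsum r off v = 0.
Proof. induction v; intros off H; simpl; auto. inversion H; subst. rewrite IHv; auto. Qed.

Lemma growth m q r s H : exact_s m q r s H -> m <> 0 -> (forall i, 0 <= r (S i) < Z.abs m) ->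
  forall n v C, 0 <= C -> (length v <= S n)%nat -> (length v <= S H)%nat ->
  Forall (fun c => Z.abs c <= C) v -> gbnd (Z.abs m) n C < Z.abs q -> psi q s v = 0 ->
  Forall (fun c => c = 0) v.
Proof.
  intros Hex Hm Hr n. induction n; intros v C HC Hl1 Hl2 Hb Hg Hpsi.
  - destruct v as [|c [|d v]]; simpl in Hl1; try lia; auto.
    unfold psi in Hpsi; simpl in Hpsi. constructor; auto. lia.
  - destruct (psi_phiinv m q r s H v Hex Hl2) as [E1 E2].
    set (X := hd0 (tl v) + sig s 1 (tl (tl v))) in *.
    assert (Hh : Z.abs (hd0 v) <= C) by (apply hd0_bound; auto).
    assert (HgC : C <= gbnd (Z.abs m) (S n) C) by (apply gbnd_ge; lia).
    assert (HX : X = 0).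
    { destruct (Z.eq_dec X 0); auto. exfalso.
      assert (Z.abs (hd0 v) = Z.abs q * Z.abs X).
      { rewrite <- Z.abs_mul. replace (hd0 v) with (- (q * X)) by lia. apply Z.abs_opp. }
      assert (1 <= Z.abs X) by lia. nia. }
    assert (Hh0 : hd0 v = 0) by (rewrite HX in E1; lia).
    assert (Hphi : psi q s (phiinv m r v) = 0) by (rewrite E2, HX; ring).
    set (C' := Z.abs m * (Z.of_nat n + 3) * C).
    assert (HC' : 0 <= C') by (unfold C'; nia).
    assert (Hb' : Forall (fun c => Z.abs c <= C') (phiinv m r v)).
    { unfold phiinv. constructor.
      - pose proof (rsum_bound m r C Hr HC (tl (tl v)) 1 (le_n 1) (Forall_tl _ _ (Forall_tl _ _ Hb))) as Hrs.
        assert (Hd : Z.abs (hd0 (tl v)) <= C) by (apply hd0_bound; auto; apply Forall_tl; auto).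
        assert (Hlen : (length (tl (tl v)) <= n)%nat) by (destruct v as [|c [|d v]]; simpl in *; lia).
        assert (Z.abs (m * hd0 (tl v)) <= Z.abs m * C) by (rewrite Z.abs_mul; nia).
        assert (Z.of_nat (length (tl (tl v))) * C * Z.abs m <= Z.of_nat n * C * Z.abs m) by nia.
        unfold C'. assert (1 <= Z.abs m) by lia. assert (0 <= Z.of_nat n) by lia. nia.
      - eapply Forall_impl; [|exact (Forall_tl _ _ (Forall_tl _ _ Hb))]. intros c Hc. cbv beta in *.
        unfold C'. assert (1 <= Z.abs m) by lia. assert (0 <= Z.of_nat n) by lia. nia. }
    assert (Hz : Forall (fun c => c = 0) (phiinv m r v)).
    { apply (IHn (phiinv m r v) C'); auto.
      - unfold phiinv; destruct v as [|c [|d v]]; simpl in *; lia.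
      - unfold phiinv; destruct v as [|c [|d v]]; simpl in *; lia. }
    unfold phiinv in Hz. inversion Hz as [|? ? Hz1 Hz2]; subst.
    rewrite rsum_zero in Hz1 by auto.
    assert (Hd1 : hd0 (tl v) = 0).
    { rewrite Z.sub_0_r in Hz1. apply Z.mul_eq_0 in Hz1. lia. }
    destruct v as [|c [|d v]]; simpl in *; subst; repeat constructor; auto.
Qed.

Fixpoint sq (m q : Z) (r : nat -> Z) (i : nat) : Z :=
  match i with O => 1 | S j => (q * sq m q r j - r (S j)) / m end.

Lemma pow_divide_le m a b : (a <= b)%nat -> (m ^ Z.of_nat a | m ^ Z.of_nat b).
Proof. intro H. exists (m ^ Z.of_nat (b - a)). rewrite <- Z.pow_add_r by lia. f_equal. lia. Qed.

Lemma exact_claim m xi r s q H : m <> 0 -> rs_spec m xi r s -> (m ^ Z.of_nat H | q - xi H) ->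
  forall i, (i <= H)%nat -> (m ^ Z.of_nat (H - i) | sq m q r i - s i H) /\
     ((i < H)%nat -> m * sq m q r (S i) = q * sq m q r i - r (S i)).
Proof.
  intros Hm [Hr0 [Hs0 Hrs]] Hq.
  assert (Hstep : forall i, (i < H)%nat -> (m ^ Z.of_nat (H - i) | sq m q r i - s i H) ->
     (m ^ Z.of_nat (H - i) | q * sq m q r i - r (S i) - m * s (S i) H)).
  { intros i Hi HD. destruct (Hrs i) as [_ [_ Hz]].
    specialize (Hz H). cbv beta in Hz.
    replace (q * sq m q r i - r (S i) - m * s (S i) H) with
      ((q - xi H) * sq m q r i + xi H * (sq m q r i - s i H) + (xi H * s i H - (m * s (S i) H + r (S i)))) by ring.
    assert (Hp : (m ^ Z.of_nat (H - i) | m ^ Z.of_nat H)) by (apply pow_divide_le; lia).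
    apply Z.divide_add_r; [apply Z.divide_add_r|].
    - apply Z.divide_mul_l. eapply Z.divide_trans; eauto.
    - apply Z.divide_mul_r. auto.
    - eapply Z.divide_trans; eauto. }
  assert (Hpow : forall i, (i < H)%nat -> m ^ Z.of_nat (H - i) = m * m ^ Z.of_nat (H - S i)).
  { intros i Hi. replace (Z.of_nat (H - i)) with (Z.succ (Z.of_nat (H - S i))) by lia.
    apply Z.pow_succ_r. lia. }
  assert (Hex : forall i, (i < H)%nat -> (m ^ Z.of_nat (H - i) | sq m q r i - s i H) ->
     m * sq m q r (S i) = q * sq m q r i - r (S i)).
  { intros i Hi HD. pose proof (Hstep i Hi HD) as HD2. rewrite Hpow in HD2 by auto.
    assert (Hm1 : (m | q * sq m q r i - r (S i))).
    { replace (q * sq m q r i - r (S i)) with ((q * sq m q r i - r (S i) - m * s (S i) H) + m * s (S i) H) by ring.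
      apply Z.divide_add_r; [|apply Z.divide_factor_l].
      eapply Z.divide_trans; [|exact HD2]. apply Z.divide_factor_l. }
    simpl sq. apply Z.mod_divide in Hm1; auto. symmetry. apply Z_div_exact_full_2; auto. }
  induction i; intros Hi.
  - assert (HD : (m ^ Z.of_nat (H - 0) | sq m q r 0 - s 0%nat H)).
    { rewrite Nat.sub_0_r. change (sq m q r 0) with 1. specialize (Hs0 H). cbv beta in Hs0.
      replace (1 - s 0%nat H) with (- (s 0%nat H - 1)) by ring. apply Z.divide_opp_r. exact Hs0. }
    split; [exact HD| intro; apply Hex; auto].
  - destruct (IHi ltac:(lia)) as [HD _].
    assert (HD' : (m ^ Z.of_nat (H - S i) | sq m q r (S i) - s (S i) H)).
    { pose proof (Hstep i ltac:(lia) HD) as HD2. rewrite Hpow in HD2 by lia.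
      rewrite <- (Hex i ltac:(lia) HD) in HD2.
      replace (m * sq m q r (S i) - m * s (S i) H) with (m * (sq m q r (S i) - s (S i) H)) in HD2 by ring.
      apply Z.mul_divide_cancel_l in HD2; auto. }
    split; [exact HD'| intro; apply Hex; auto].
Qed.

Lemma exact_from m xi r s q H : m <> 0 -> rs_spec m xi r s -> (m ^ Z.of_nat H | q - xi H) ->
  exact_s m q r (sq m q r) H.
Proof.
  intros Hm Hrs Hq. split; [reflexivity|]. intros i Hi.
  destruct (exact_claim m xi r s q H Hm Hrs Hq i ltac:(lia)) as [_ E]. auto.
Qed.

Fixpoint syl (w : word gen2) : list Z * list (bool * list Z) :=
  match w with
  | [] => ([], [])
  | (gb, b) :: w' => let (p, L) := syl w' in (vadd [if b then -1 else 1] p, L)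
  | (ga, b) :: w' => let (p, L) := syl w' in ([], (b, p) :: L)
  end.

Lemma syl_T m r w : weq (tBS_rel m r) (subst f_gen w) (tword (fst (syl w)) (snd (syl w))).
Proof.
  induction w as [|[x b] w IH]. reflexivity.
  change (subst f_gen ((x, b) :: w)) with ((if b then inv_word (f_gen x) else f_gen x) ++ subst f_gen w).
  rewrite IH. cbn [syl]. destruct (syl w) as [p L]. destruct x; cbn [fst snd].
  - destruct b; reflexivity.
  - unfold tword. rewrite app_assoc. f_equiv. rewrite <- vword_add. f_equiv.
    destruct b; reflexivity.
Qed.

Lemma syl_B m q s w : weq (BS_rel m q) w (iword (psi q s (fst (syl w))) (psiL q s (snd (syl w)))).
Proof.
  induction w as [|[x b] w IH]. reflexivity.
  change ((x, b) :: w) with ([(x, b)] ++ w) at 1. rewrite IH at 1. cbn [syl]. destruct (syl w) as [p L].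
  destruct x; cbn [fst snd].
  - reflexivity.
  - unfold iword. rewrite app_assoc. f_equiv. unfold psi. rewrite psio_vadd.
    rewrite <- wpow_add. f_equiv. destruct b; reflexivity.
Qed.

Lemma syl_bound w : vbound 1 (fst (syl w)) (snd (syl w)) /\ (length (snd (syl w)) <= length w)%nat.
Proof.
  induction w as [|[x b] w IH]. split; [split; simpl; auto|simpl; lia].
  cbn [syl]. destruct (syl w) as [p L]. simpl in *. destruct IH as [[H1 H2] H3]. destruct x.
  - split; [split|]; simpl; auto. lia.
  - split; [split|]; simpl; auto; try lia. destruct p as [|c [|d p]]; simpl in *; lia.
Qed.

Lemma bword_pow m q r H : exact_s m q r (sq m q r) H -> forall k, (k <= H)%nat ->
  weq (BS_rel m q) (bword m r k) (wpow (gen gb) (beta q (sq m q r) k)).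
Proof.
  intros [Hs0 Hs] k. induction k as [|[|j] IH]; intros Hk.
  - simpl. rewrite wpow_1. reflexivity.
  - pose proof (BS_conj_a m q 1) as E. rewrite !Z.mul_1_r in E. simpl beta. rewrite ?Z.mul_1_r. exact E.
  - change (bword m r (S (S j))) with (gen ga ++ bword m r (S j) ++ wpow (gen gb) (- r (S j)) ++ inv_word (gen ga)).
    rewrite IH by lia. rewrite app_assoc with (l := wpow (gen gb) _), wpow_add.
    simpl beta. replace (q * sq m q r j + - r (S j)) with (m * sq m q r (S j)) by (rewrite Hs by lia; ring).
    apply BS_conj_a.
Qed.

Lemma subst_g_e m r i : subst (g_gen m r) (gen (tE i)) = bword m r i.
Proof. rewrite subst_gen. reflexivity. Qed.

Lemma exact_eventually m xi r s xis H : m <> 0 -> rs_spec m xi r s -> zm_conv m xis xi ->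
  exists n0, forall n, (n0 <= n)%nat -> exact_s m (xis n) r (sq m (xis n) r) H.
Proof.
  intros Hm Hrs Hc. destruct (Hc H) as [n0 Hn0]. exists n0. intros n Hn.
  apply (exact_from m xi r s); auto.
Qed.

Lemma canc_lem {X} (R : word X -> Prop) Y u : u = Y ++ inv_word Y -> weq R u [].
Proof. intros ->. apply weq_inv_r. Qed.

Lemma dirA_rel m xi r s xis w : m <> 0 -> rs_spec m xi r s -> zm_conv m xis xi -> tBS_rel m r w ->
  exists n0, forall n, (n0 <= n)%nat -> weq (BS_rel m (xis n)) (subst (g_gen m r) w) [].
Proof.
  intros Hm Hrs Hc Hw. destruct Hw as [[i [j ->]] | [-> | [i [Hi ->]]]].
  - destruct (exact_eventually m xi r s xis (S (Nat.max i j)) Hm Hrs Hc) as [n0 Hn0].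
    exists n0. intros n Hn. specialize (Hn0 n Hn).
    rewrite !subst_app, !subst_inv, !subst_g_e.
    rewrite !(bword_pow m (xis n) r (S (Nat.max i j)) Hn0) by lia.
    rewrite <- !wpow_opp, !wpow_add.
    match goal with |- weq _ (wpow _ ?k) _ => replace k with 0 by ring end. reflexivity.
  - exists O. intros n _. rewrite !subst_app, !subst_inv, subst_wpow, !subst_gen.
    change (g_gen m r (tE 1)) with (gen ga ++ wpow (gen gb) m ++ inv_word (gen ga)).
    change (g_gen m r (tE 0)) with (gen gb). change (g_gen m r tA) with (gen ga).
    apply (canc_lem _ (gen ga ++ wpow (gen gb) m ++ inv_word (gen ga))). rewrite <- !app_assoc. reflexivity.
  - exists O. intros n _. rewrite !subst_app, !subst_inv, subst_wpow, !subst_gen.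
    destruct i as [|j]; [lia|].
    change (g_gen m r (tE (S (S j)))) with (gen ga ++ bword m r (S j) ++ wpow (gen gb) (- r (S j)) ++ inv_word (gen ga)).
    change (g_gen m r (tE (S j))) with (bword m r (S j)). change (g_gen m r (tE 0)) with (gen gb).
    change (g_gen m r tA) with (gen ga).
    apply (canc_lem _ (gen ga ++ bword m r (S j) ++ wpow (gen gb) (- r (S j)) ++ inv_word (gen ga))).
    rewrite <- !app_assoc. reflexivity.
Qed.

Lemma dirA m xi r s xis u v : m <> 0 -> rs_spec m xi r s -> zm_conv m xis xi -> weq (tBS_rel m r) u v ->
  exists n0, forall n, (n0 <= n)%nat -> weq (BS_rel m (xis n)) (subst (g_gen m r) u) (subst (g_gen m r) v).
Proof.
  intros Hm Hrs Hc H. induction H.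
  - exists O; intros; reflexivity.
  - destruct IHweq as [n0 Hn0]. exists n0; intros; symmetry; auto.
  - destruct IHweq1 as [n1 H1], IHweq2 as [n2 H2]. exists (Nat.max n1 n2). intros n Hn.
    rewrite (H1 n), (H2 n) by lia. reflexivity.
  - destruct IHweq1 as [n1 H1], IHweq2 as [n2 H2]. exists (Nat.max n1 n2). intros n Hn.
    rewrite !subst_app, (H1 n), (H2 n) by lia. reflexivity.
  - exists O. intros n _. change [x; inv_letter x] with ([x] ++ inv_word [x]).
    rewrite subst_app, subst_inv. apply weq_inv_r.
  - apply (dirA_rel m xi r s xis r0); auto.
Qed.

Lemma gf_id m r w : subst (g_gen m r) (subst f_gen w) = w.
Proof.
  induction w as [|[x b] w IH]; auto.
  change (subst f_gen ((x, b) :: w)) with ((if b then inv_word (f_gen x) else f_gen x) ++ subst f_gen w).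
  rewrite subst_app, IH. destruct x, b; reflexivity.
Qed.

Lemma fg_bword m r i : weq (tBS_rel m r) (subst f_gen (bword m r i)) (eT i).
Proof.
  induction i as [|[|j] IH].
  - reflexivity.
  - change (bword m r 1) with (gen ga ++ wpow (gen gb) m ++ inv_word (gen ga)).
    rewrite !subst_app, subst_inv, subst_wpow, !subst_gen. apply rel_e1.
  - change (bword m r (S (S j))) with (gen ga ++ bword m r (S j) ++ wpow (gen gb) (- r (S j)) ++ inv_word (gen ga)).
    rewrite !subst_app, subst_inv, subst_wpow, !subst_gen. rewrite IH.
    rewrite <- (rel_ei m r (S j)) by lia. unfold conj, tA_w, eT. rewrite <- !app_assoc. reflexivity.
Qed.

Lemma fg_weq m r w : weq (tBS_rel m r) (subst f_gen (subst (g_gen m r) w)) w.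
Proof.
  induction w as [|[x b] w IH]. reflexivity.
  change (subst (g_gen m r) ((x, b) :: w)) with ((if b then inv_word (g_gen m r x) else g_gen m r x) ++ subst (g_gen m r) w).
  rewrite subst_app, IH. change ((x, b) :: w) with ([(x, b)] ++ w). f_equiv.
  destruct x as [|i].
  - destruct b; reflexivity.
  - simpl g_gen. destruct b.
    + rewrite subst_inv, fg_bword. reflexivity.
    + rewrite fg_bword. reflexivity.
Qed.

Fixpoint sumabs (v : list Z) : Z := match v with [] => 0 | c :: v' => Z.abs c + sumabs v' end.
Fixpoint tot (L : list (bool * list Z)) : Z := match L with [] => 0 | (_, v) :: L' => sumabs v + tot L' end.

Lemma sumabs_nonneg v : 0 <= sumabs v.
Proof. induction v; simpl; lia. Qed.

Lemma tot_nonneg L : 0 <= tot L.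
Proof. induction L as [|[e v] L IH]; simpl; auto. lia. pose proof (sumabs_nonneg v). lia. Qed.

Lemma sumabs_bound v C : sumabs v <= C -> Forall (fun c => Z.abs c <= C) v.
Proof. induction v; simpl; intro H; constructor; pose proof (sumabs_nonneg v). lia. apply IHv. lia. Qed.

Lemma tot_bound L : Forall (fun x => sumabs (snd x) <= tot L) L.
Proof.
  induction L as [|[e v] L IH]; simpl; constructor.
  - simpl. pose proof (tot_nonneg L). lia.
  - eapply Forall_impl; [|exact IH]. intros x Hx. cbv beta in *. pose proof (sumabs_nonneg v). lia.
Qed.

Lemma vword_zero off v : Forall (fun c => c = 0) v -> vword off v = [].
Proof. revert off; induction v; intros off H; simpl; auto. inversion H; subst. rewrite IHv; auto. Qed.

Lemma act_iword_nil m q k : act m q ([], 0) (iword k []) = ([], k).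
Proof. unfold iword. simpl tailword. rewrite app_nil_r, act_wpow_b. reflexivity. Qed.

Theorem corollary2p9 (m : Z) (hm : m <> 0)
  (xi : nat -> Z) (hxi : zm_elem m xi)
  (r : nat -> Z) (s : nat -> nat -> Z) (hrs : rs_spec m xi r s)
  (xis : nat -> Z) (hxis0 : forall n, xis n <> 0)
  (hinf : tends_to_infty xis) (hconv : zm_conv m xis xi)
  (N : word gen2 -> Prop)
  (hN : marked_conv (fun n => BS_ker m (xis n)) N) :
  inverse_isos N (tBS_ker m r) f_gen (g_gen m r).
Proof.
  assert (Hr : forall i, 0 <= r (S i) < Z.abs m) by (intro i; destruct hrs as [_ [_ H]]; apply H).
  split; [|split; [|split]].
  - intros w Hw.
    destruct (syl_bound w) as [HB0 HL0].
    set (H := S (S (length w))).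
    pose proof (red_weq m r hm (length w) (fst (syl w)) (snd (syl w))) as HT.
    pose proof (red_pf m r (length w) (fst (syl w)) (snd (syl w)) HL0) as Hpf.
    pose proof (red_bound m r (length w) 1 (fst (syl w)) (snd (syl w)) HB0 (le_n 1)) as HB.
    destruct (hN (length w)) as [n1 Hn1].
    destruct (red m r (length w) (fst (syl w)) (snd (syl w))) as [p L] eqn:Ered.
    simpl fst in *; simpl snd in *.
    set (M := sumabs p + tot L).
    assert (HM : 0 <= M) by (pose proof (sumabs_nonneg p); pose proof (tot_nonneg L); unfold M; lia).
    set (Q := gbnd (Z.abs m) H M + 1).
    destruct (hinf Q) as [n2 Hn2].
    destruct (exact_eventually m xi r s xis H hm hrs hconv) as [n3 Hn3].
    set (n := Nat.max n1 (Nat.max n2 n3)).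
    set (q := xis n).
    assert (Hq0 : q <> 0) by apply hxis0.
    assert (HqQ : Q <= Z.abs q) by (apply Hn2; lia).
    assert (Hex : exact_s m q r (sq m q r) H) by (apply Hn3; lia).
    assert (HBS : BS_ker m q w) by (apply (Hn1 n); auto; lia).
    apply BS_ker_act in HBS; auto.
    assert (Hn0 : normal m q ([], 0)) by (split; simpl; auto).
    rewrite (weq_act m q w _ hm Hq0 (syl_B m q (sq m q r) w) ([], 0) Hn0) in HBS.
    rewrite (weq_act m q _ _ hm Hq0 (red_BS m q r (sq m q r) H Hex hm (length w) 1 _ _ HB0 (le_n 1) ltac:(unfold H; lia)) ([], 0) Hn0) in HBS.
    rewrite Ered in HBS. simpl fst in HBS; simpl snd in HBS.
    assert (HgM : M <= gbnd (Z.abs m) H M) by (apply gbnd_ge; lia).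
    destruct HB as [HBp HBL].
    destruct L as [|x L'].
    + rewrite act_iword_nil in HBS. injection HBS as Hpsi.
      assert (Hz : Forall (fun c => c = 0) p).
      { apply (growth m q r (sq m q r) H Hex hm Hr H p M HM); try (unfold H; lia).
        - apply sumabs_bound. unfold M. simpl. lia.
        - unfold Q in HqQ. lia. }
      unfold tBS_ker, pres_ker. rewrite (syl_T m r w), HT. unfold tword. simpl ttail. rewrite vword_zero by auto. reflexivity.
    + exfalso. revert HBS. apply britton; auto. simpl. discriminate.
      apply (pf_transfer m q r (sq m q r) H Hex hm); auto.
      * eapply Forall_impl; [|exact HBL]. intros y Hy. cbv beta in *. unfold H. lia.
      * pose proof (tot_bound (x :: L')) as Ht.
        eapply Forall_impl; [|exact Ht]. intros y Hy. cbv beta in *.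
        pose proof (hd0_bound (sumabs (snd y)) (snd y) (sumabs_nonneg _) (sumabs_bound _ _ (Z.le_refl _))).
        pose proof (sumabs_nonneg p). unfold Q, M in *. lia.
  - intros w Hw. unfold tBS_ker, pres_ker in Hw.
    destruct (dirA m xi r s xis w [] hm hrs hconv Hw) as [n0 Hn0].
    destruct (hN (length (subst (g_gen m r) w))) as [n1 Hn1].
    apply (Hn1 (Nat.max n0 n1)); [lia | lia |]. unfold BS_ker, pres_ker. apply (Hn0 (Nat.max n0 n1)). lia.
  - intros w. rewrite gf_id. destruct (hN (length (w ++ inv_word w))) as [n1 Hn1].
    apply (Hn1 n1); auto. apply weq_inv_r.
  - intros w. unfold tBS_ker, pres_ker. rewrite fg_weq. apply weq_inv_r.
Qed.
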